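(* Let $A\in SL(3,\mathbb{Z})$ be hyperbolic (no eigenvalue of modulus $1$). If $B\in SL(3,\mathbb{Z})$ satisfies $AB=BA$, then either $B=\mathrm{Id}$ or $B$ is hyperbolic. *)

(* Defs.v *)
From mathcomp Require Import all_boot all_order all_algebra all_field.
Set Implicit Arguments. Unset Strict Implicit. Unset Printing Implicit Defensive.
Import Order.TTheory GRing.Theory Num.Theory.
Local Open Scope ring_scope.

Definition inSL (n : nat) (A : 'M[int]_n) : Prop := \det A = 1.

(* Complexification of an integer matrix (entries in algC, the algebraic complex numbers;
   eigenvalues of integer matrices are algebraic, so this loses nothing). *)
Definition cplx_mx (n : nat) (A : 'M[int]_n) : 'M[algC]_n := map_mx (fun z : int => z%:~R) A.

Definition hyperbolic (n : nat) (A : 'M[int]_n) : Prop :=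
  forall z : algC, eigenvalue (cplx_mx A) z -> `|z| != 1.

(* Main.v *)
Require Import Defs.
From mathcomp Require Import all_boot all_order all_algebra all_field.
From mathcomp Require Import ring zify.
Set Implicit Arguments. Unset Strict Implicit. Unset Printing Implicit Defensive.
Import Order.TTheory GRing.Theory Num.Theory.
Local Open Scope ring_scope.

Definition qmx (M : 'M[int]_3) : 'M[rat]_3 := map_mx (fun z : int => z%:~R) M.

Lemma cplx_qmx M : cplx_mx M = map_mx ratr (qmx M).
Proof. by apply/matrixP => i j; rewrite !mxE ratr_int. Qed.

Lemma eig_map M (v : 'rV[rat]_3) r : v != 0 -> v *m qmx M = r *: v ->
  eigenvalue (cplx_mx M) (ratr r).
Proof.
move=> v0 hv; apply/eigenvalueP; exists (map_mx ratr v).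
  by rewrite cplx_qmx -map_mxM hv map_mxZ.
by rewrite map_mx_eq0.
Qed.

Lemma eig_Aint (M : 'M[int]_3) z : eigenvalue (cplx_mx M) z -> z \in Aint.
Proof.
rewrite eigenvalue_root_char => hz.
have E : char_poly (cplx_mx M) = map_poly (fun z : int => z%:~R) (char_poly M).
  by rewrite -map_char_poly.
apply: (root_monic_Aint (p := map_poly (fun z : int => (z%:~R : algC)) (char_poly M))).
- by rewrite -E.
- apply/monicP; rewrite lead_coef_map_inj ?(monicP (char_poly_monic M)) ?rmorph1 //; exact: intr_inj.
- by apply/polyOverP => i; rewrite coef_map /= rpred_int.
Qed.

Lemma eig_int M (v : 'rV[rat]_3) r : v != 0 -> v *m qmx M = r *: v ->
  (ratr r : algC) \in Num.int.
Proof.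
move=> v0 hv; apply: Cint_rat_Aint; first exact: Crat_rat.
exact: eig_Aint (eig_map v0 hv).
Qed.

Lemma rat_eig_contra (A : 'M[int]_3) (v : 'rV[rat]_3) r :
  inSL A -> hyperbolic A -> v != 0 -> v *m qmx A = r *: v -> False.
Proof.
move=> hA hyp v0 hv.
have hI : qmx A *m qmx (\adj A) = 1%:M.
  by rewrite /qmx -map_mxM mul_mx_adj hA map_mx1.
have vK : v = r *: (v *m qmx (\adj A)).
  by rewrite scalemxAl -hv -mulmxA hI mulmx1.
have r0 : r != 0.
  by apply: contra v0 => /eqP r0; rewrite vK r0 scale0r.
have hv' : v *m qmx (\adj A) = r^-1 *: v.
  by rewrite {2}vK scalerA mulVf // scale1r.
have i1 := eig_int v0 hv.
have i2 := eig_int v0 hv'.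
rewrite fmorphV in i2.
have x0 : (ratr r : algC) != 0 by rewrite fmorph_eq0.
have g1 := norm_intr_ge1 i1 x0.
have g2 := norm_intr_ge1 i2 (invr_neq0 x0).
rewrite normfV invf_ge1 ?normr_gt0 // in g2.
have : `|(ratr r : algC)| = 1 by apply/le_anti; rewrite g1 g2.
by apply/eqP; apply: hyp; exact: eig_map v0 hv.
Qed.

Lemma inv_rank1 (Q S : 'M[rat]_3) : \rank S = 1%N -> (S *m Q <= S)%MS ->
  exists v : 'rV_3, exists r, v != 0 /\ v *m Q = r *: v.
Proof.
move=> rS hS.
have [i ri] : exists i, row i S != 0.
  case: (pickP (fun i => row i S != 0)) => [i hi|h]; first by exists i.
  have S0 : S = 0.
    by apply/row_matrixP => i; have := h i; rewrite row0 => /negbFE/eqP.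
  by rewrite S0 mxrank0 in rS.
have := mxrank_leqif_eq (row_sub i S).
rewrite rank_rV ri rS => -[_ /esym]; rewrite eqxx => /eqmxP eqvS.
have h1 : (row i S *m Q <= row i S)%MS.
  by rewrite (eqmxMr Q eqvS) eqvS hS.
case/sub_rVP: h1 => a ha; by exists (row i S), a.
Qed.

Lemma key (A B : 'M[int]_3) (c : rat) : inSL A -> hyperbolic A -> A *m B = B *m A ->
  eigenvalue (qmx B) c -> qmx B = c%:M.
Proof.
move=> hA hyp hAB hc.
set C := qmx B - c%:M.
have comm : C *m qmx A = qmx A *m C.
  rewrite /C mulmxBl mulmxBr scalar_mxC; congr (_ - _).
  by rewrite /qmx -!map_mxM hAB.
have contra (S : 'M[rat]_3) : \rank S = 1%N -> (S *m qmx A <= S)%MS -> False.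
  move=> rS hS; have [v [r [v0 hv]]] := inv_rank1 rS hS.
  exact: rat_eig_contra hA hyp v0 hv.
have hK : kermx C != 0 by exact: hc.
have rK := mxrank_ker C.
have : (\rank C <= 3)%N by exact: rank_leq_col.
case eC: (\rank C) rK => [|[|[|[|k]]]] rK // _.
- by apply/eqP; rewrite -subr_eq0 -mxrank_eq0 eC.
- by exfalso; apply: (contra C eC); rewrite comm submxMl.
- exfalso; apply: (contra (kermx C)); first by rewrite rK.
  by rewrite sub_kermx -mulmxA -comm mulmxA mulmx_ker mul0mx.
- by exfalso; move: hK; rewrite -mxrank_eq0 rK.
Qed.

Lemma root_pm1 (B : 'M[int]_3) (z : algC) : inSL B -> eigenvalue (cplx_mx B) z ->
  `|z| = 1 -> root (char_poly B) 1 \/ root (char_poly B) (-1).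
Proof.
move=> hB hz nz.
rewrite eigenvalue_root_char in hz.
have E : char_poly (cplx_mx B) = map_poly (fun z : int => z%:~R) (char_poly B).
  by rewrite -map_char_poly.
rewrite E in hz.
set p := char_poly B in E hz *.
have sp : size p = 4%N := size_char_poly B.
have a3 : p`_3 = 1.
  by have := monicP (char_poly_monic B); rewrite /lead_coef -/p sp.
have a0 : p`_0 = -1.
  by rewrite char_poly_det hB.
have z0 : z != 0 by apply/eqP => z0; move: nz; rewrite z0 normr0 => /eqP; rewrite eq_sym oner_eq0.
have zc : z^* = z^-1.
  by rewrite invC_norm nz expr1n invr1 mul1r.
have hz' := hz.
move: hz; rewrite /root (horner_coef_wide (n := 4)); last by rewrite size_map_inj_poly ?sp //; exact: intr_inj.
rewrite !big_ord_recl big_ord0 !coef_map /= a0 a3 => /eqP E1.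
set c1 : algC := (p`_1)%:~R. set c2 : algC := (p`_2)%:~R.
have E1' : -1 + c1 * z + c2 * z^+2 + z^+3 = 0.
  by rewrite -E1 /bump /= rmorphN1 rmorph1; ring.
have E2 := congr1 Num.conj E1'.
rewrite !(rmorphD, rmorphM, rmorphXn, rmorph0, rmorphN1) /= in E2.
rewrite zc !conj_intr ?rpred_int // in E2.
have H : (c1 + c2) * z * (z + 1) = 0.
  transitivity ((-1 + c1 * z + c2 * z ^+ 2 + z ^+ 3) + z^+3 * (-1 + c1 / z + c2 * (z^-1 / z) + z^-1 * (z^-1 / z))); last by rewrite E1' E2 mulr0 addr0.
  by field.
move/eqP: H; rewrite !mulf_eq0 (negbTE z0) orbF => /orP [h12 | hz1].
  left; rewrite /c1 /c2 -intrD intr_eq0 in h12; move/eqP: h12 => h12.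
  rewrite /root (horner_coef_wide (n := 4)) ?sp // !big_ord_recl big_ord0 /bump /= a0 a3 !expr1n !mulr1.
  change (-1 + (p`_1 + (p`_2 + (1 + 0))) == 0 :> int); apply/eqP; lia.
right; rewrite addr_eq0 in hz1; move/eqP: hz1 => hz1.
move: hz'; rewrite /root hz1 -(rmorphN1 (intr : int -> algC)) horner_map intr_eq0 //.
Qed.

Theorem mainTheorem13 (A B : 'M[int]_3) :
  inSL A -> hyperbolic A -> inSL B -> A *m B = B *m A ->
  B = 1%:M \/ hyperbolic B.
Proof.
move=> hA hyp hB hAB.
case: (eqVneq B 1%:M) => [->|hB1]; first by left.
right => z hz; apply/negP => /eqP nz.
have [h|h] := root_pm1 hB hz nz.
- have hq : eigenvalue (qmx B) 1.
    rewrite eigenvalue_root_char /qmx -map_char_poly.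
    by rewrite /root -[1 : rat](rmorph1 (intr : int -> rat)) horner_map (eqP h) rmorph0.
  have E := key hA hyp hAB hq.
  move/eqP: hB1; apply; apply/matrixP => i j.
  move/matrixP/(_ i j): E; rewrite !mxE.
  move=> e; apply: (@intr_inj rat); rewrite e; by case: (i == j); rewrite /= ?rmorph1 ?rmorph0.
- have hq : eigenvalue (qmx B) (-1).
    rewrite eigenvalue_root_char /qmx -map_char_poly.
    by rewrite /root -[-1 : rat](rmorphN1 (intr : int -> rat)) horner_map (eqP h) rmorph0.
  have E := key hA hyp hAB hq.
  have := congr1 determinant E.
  by rewrite det_scalar /qmx det_map_mx hB.
Qed.
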